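(* Let $\mathbb{A}$ be a medial algebra over a field of characteristic not $2,3$ and let $c$ be a nonzero idempotent with $\ker L_c=0$. Then the function $\phi(x)=\dfrac{\det L_x}{\det L_c}$ satisfies $\phi(xy)=\phi(x)\phi(y)$ for all $x,y\in\mathbb{A}$.
   Context: All algebras are commutative, possibly nonassociative, finite-dimensional. Medial: $(xy)(zw)=(xz)(yw)$ identically. $L_x:y\mapsto xy$. *)

(* Defs.v *)
(* A finite-dimensional commutative (possibly nonassociative)
   algebra over a field F is modelled on coordinates F^n = 'rV[F]_n with a
   bilinear multiplication mul. *)
From HB Require Import structures.
From mathcomp Require Import all_boot all_order all_algebra.
Set Implicit Arguments. Unset Strict Implicit. Unset Printing Implicit Defensive.
Import Order.TTheory GRing.Theory.
Local Open Scope ring_scope.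

Definition alg_bilinear (F : fieldType) (n : nat)
  (mul : 'rV[F]_n -> 'rV[F]_n -> 'rV[F]_n) : Prop :=
  (forall x (a : F) y z, mul x (a *: y + z) = a *: mul x y + mul x z) /\
  (forall x (a : F) y z, mul (a *: y + z) x = a *: mul y x + mul z x).

Definition alg_commutative (F : fieldType) (n : nat)
  (mul : 'rV[F]_n -> 'rV[F]_n -> 'rV[F]_n) : Prop :=
  forall x y, mul x y = mul y x.

Definition alg_medial (F : fieldType) (n : nat)
  (mul : 'rV[F]_n -> 'rV[F]_n -> 'rV[F]_n) : Prop :=
  forall x y z w, mul (mul x y) (mul z w) = mul (mul x z) (mul y w).

Definition Lmx (F : fieldType) (n : nat)
  (mul : 'rV[F]_n -> 'rV[F]_n -> 'rV[F]_n) (x : 'rV[F]_n) : 'M[F]_n :=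
  lin1_mx (mul x).

(* Main.v *)
Require Import Defs.
From HB Require Import structures.
From mathcomp Require Import all_boot all_order all_algebra.
From mathcomp Require Import ring.
Import GRing.Theory.
Local Open Scope ring_scope.

Lemma lin1_apply (F : fieldType) (n : nat) (f : 'rV[F]_n -> 'rV[F]_n)
  (hf : forall (a : F) y z, f (a *: y + z) = a *: f y + f z) u :
  u *m lin1_mx f = f u.
Proof.
pose fL : {linear 'rV[F]_n -> 'rV[F]_n} :=
  HB.pack f (GRing.isLinear.Build F 'rV[F]_n 'rV[F]_n *:%R f hf).
exact: (mul_rV_lin1 fL u).
Qed.

Theorem theorem3p10 (F : fieldType) (n : nat)
  (mul : 'rV[F]_n -> 'rV[F]_n -> 'rV[F]_n)
  (hchar2 : (2%N \notin [pchar F])) (hchar3 : (3%N \notin [pchar F]))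
  (hbil : alg_bilinear mul) (hcomm : alg_commutative mul)
  (hmed : alg_medial mul)
  (c : 'rV[F]_n) (hc0 : c != 0) (hcc : mul c c = c)
  (hker : forall y, mul c y = 0 -> y = 0) :
  let phi := fun x => \det (Lmx mul x) / \det (Lmx mul c) in
  forall x y, phi (mul x y) = phi x * phi y.
Proof.
case: hbil => hl _.
have LP : forall x u, u *m Lmx mul x = mul x u.
  by move=> x u; rewrite /Lmx lin1_apply.
have key : forall x y z, Lmx mul z *m Lmx mul (mul x y) = Lmx mul y *m Lmx mul (mul x z).
  move=> x y z; apply/row_matrixP => i.
  by rewrite !rowE !mulmxA !LP hmed.
have dc : \det (Lmx mul c) != 0.
  apply/negP => /det0P [v vn0]; rewrite LP => /hker /eqP; exact/negP.
have dcz : forall z, \det (Lmx mul (mul c z)) = \det (Lmx mul z).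
  move=> z; have := congr1 determinant (key c c z).
  by rewrite hcc !det_mulmx [X in X = _]mulrC => /(mulfI dc) <-.
move=> phi x y; rewrite /phi.
have := congr1 determinant (key x y c).
rewrite !det_mulmx (hcomm x c) dcz => E.
rewrite -(mulKf dc (\det (Lmx mul (mul x y)))) E.
ring.
Qed.
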